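(* Let $\mathcal{E}\subset\mathcal{P}_n$ be a maximal correctable error set containing the identity, and let $R=\{R_\chi\}_{\chi\in\hat G\setminus\{1\}}$ be a complete set of frame fields adapted to $\mathcal{E}$. Then there exist a Hilbert space $\mathcal{H}_{\rm gauge}$ and a (frame-dependent) tensor product $\otimes_R$, i.e. a bilinear map $\otimes_R:\mathcal{H}_{\rm pn}\times\mathcal{H}_{\rm gauge}\to\mathcal{H}_{\rm kin}$ whose linear extension to $\mathcal{H}_{\rm pn}\otimes\mathcal{H}_{\rm gauge}$ is a linear isomorphism onto $\mathcal{H}_{\rm kin}$ (written $\mathcal{H}_{\rm kin}=\mathcal{H}_{\rm pn}\otimes_R\mathcal{H}_{\rm gauge}$), such that: 1. $\dim\mathcal{H}_{\rm gauge}=2^{n-k}$ and $\mathcal{H}_{\rm gauge}$ carries a unitary representation $U_R$ of $G$ with $U^g(\ket{\psi}\otimes_R\ket{w})=\ket{\psi}\otimes_R U^g_R\ket{w}$ for all $g\in G$, $\ket\psi\in\mathcal{H}_{\rm pn}$, $\ket w\in\mathcal{H}_{\rm gauge}$ (i.e. $U^g=\mathrm{id}_{\mathcal{H}_{\rm pn}}\otimes_RU^g_R$); 2. $\mathcal{H}_{\rm gauge}$ has an orthonormal basis $\{\ket\chi\}_{\chi\in\hat G}$ with $\mathcal{H}_\chi=\mathcal{H}_{\rm pn}\otimes_R\ket\chi$ for all $\chi\in\hat G$; 3. for every $\ket\psi\in\mathcal{H}_{\rm pn}$ and $\chi\in\hat G$, $R_\chi(\ket\psi\otimes_R\ket1)=\ket\psi\otimes_R\ket\chi$;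 4. for every $\chi\in\hat G$ and every $E_\chi\in\mathcal{E}\cap C_\chi$ there is $\eta\in\mathbb{C}$, $|\eta|=1$, with $E_\chi(\ket\psi\otimes_R\ket1)=\eta\ket\psi\otimes_R\ket\chi$ for all $\ket\psi\in\mathcal{H}_{\rm pn}$; 5. $U_R$ is isomorphic to the regular representation of $G$.
   Context: Let $n\ge1$, $0\le k<n$, $\mathcal{H}_{\rm kin}=(\mathbb{C}^2)^{\otimes n}$, $\mathcal{P}_n$ the $n$-qubit Pauli group. Let $G=\mathbb{Z}_2^{\times(n-k)}$ and $U:G\to\mathcal{P}_n$, $g\mapsto U^g$, a faithful unitary representation with $-I\notin U(G)$. $\mathcal{H}_{\rm pn}=\{\psi:U^g\psi=\psi\ \forall g\}$, $\Pi_{\rm pn}=\frac1{|G|}\sum_gU^g$. $\hat G$ is the group of characters $\chi:G\to\{\pm1\}$, with trivial character $1$; $\mathcal{H}_\chi$ is the image of $P_\chi=\frac1{|G|}\sum_g\chi(g)U^g$ (so $\mathcal{H}_1=\mathcal{H}_{\rm pn}$), and $C_\chi=\{E\in\mathcal{P}_n:U^gE(U^g)^\dagger=\chi(g)E\ \forall g\}$. A set $\{E_i\}$ is correctable if $\Pi_{\rm pn}E_i^\dagger E_j\Pi_{\rm pn}=C_{ij}\Pi_{\rm pn}$ with $(C_{ij})$ Hermitian, and maximal if $\mathrm{rank}(C)=2^{n-k}$. A frame field of charge $\chi\in\hat G\setminus\{1\}$ is an isometry $R_\chi:\mathcal{H}_{\rm pn}\to\mathcal{H}_\chi$; a complete set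 of frame fields is a collection $R=\{R_\chi\}_{\chi\ne1}$, one for each nontrivial $\chi$; by convention $R_1:=\mathrm{id}_{\mathcal{H}_{\rm pn}}$. $R$ is adapted to $\mathcal{E}$ if for every $\chi\ne1$ there are $E_\chi\in\mathcal{E}\cap C_\chi$ and $\eta_\chi\in\mathbb{C}$, $|\eta_\chi|=1$, with $R_\chi=\eta_\chi E_\chi|_{\mathcal{H}_{\rm pn}}$ (equivalently, the recovery channel $\mathcal{O}_R(\rho)=\Pi_{\rm pn}\rho\Pi_{\rm pn}+\sum_{\chi\ne1}R_\chi^{-1}P_\chi\rho P_\chi R_\chi$ corrects $\mathcal{E}$). *)

(* Defs.v *)
From HB Require Import structures.
From mathcomp Require Import all_boot all_order all_algebra all_field.
Set Implicit Arguments. Unset Strict Implicit. Unset Printing Implicit Defensive.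
Import Order.TTheory GRing.Theory Num.Theory.
Local Open Scope ring_scope.

Definition adj {m p : nat} (A : 'M[algC]_(m, p)) : 'M[algC]_(p, m) :=
  (map_mx Num.conj A)^T.

Definition inner {m : nat} (u v : 'cV[algC]_m) : algC := (adj u *m v) 0 0.

(* j-th bit of the computational-basis index a of (C^2)^{\otimes n}. *)
Definition bit (j a : nat) : bool := odd (a %/ 2 ^ j).

(* Single-qubit Pauli matrices I, X, Y, Z (index 0,1,2,3), entry (r,s). *)
Definition sigma (p : 'I_4) (r s : bool) : algC :=
  match val p with
  | 0 => (r == s)%:R
  | 1 => (r != s)%:R
  | 2 => if r == s then 0 else if r then 'i else - 'i
  | _ => if r == s then (if r then -1 else 1) else 0
  end.

(* Pauli string sigma_{p_0} \otimes ... \otimes sigma_{p_{n-1}} on (C^2)^{\otimes n},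
   written entrywise via the Kronecker-product formula in the computational basis. *)
Definition pauli_string (n : nat) (p : n.-tuple 'I_4) : 'M[algC]_(2 ^ n) :=
  \matrix_(a, b) \prod_(j < n) sigma (tnth p j) (bit j a) (bit j b).

Definition pauli_group (n : nat) (P : 'M[algC]_(2 ^ n)) : Prop :=
  exists (c : 'I_4) (p : n.-tuple 'I_4), P = 'i ^+ c *: pauli_string p.

Notation grp m := 'rV['F_2]_m.

(* Characters chi : G -> {+1,-1}, encoded as boolean functions
   (true <-> value -1); the character property is multiplicativity. *)
Definition charT (m : nat) := {ffun grp m -> bool}.
Definition is_char (m : nat) (chi : charT m) : bool :=
  [forall g, forall h, chi (g + h) == chi g (+) chi h].
Definition chi_val (m : nat) (chi : charT m) (g : grp m) : algC :=
  (-1) ^+ chi g.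
Definition chi1 (m : nat) : charT m := [ffun _ => false].

Section Code.
Variables (n m : nat) (U : grp m -> 'M[algC]_(2 ^ n)).

Definition in_pn (psi : 'cV[algC]_(2 ^ n)) : Prop := forall g, U g *m psi = psi.

Definition Pi_pn : 'M[algC]_(2 ^ n) := #|grp m|%:R^-1 *: \sum_g U g.
Definition P_chi (chi : charT m) : 'M[algC]_(2 ^ n) :=
  #|grp m|%:R^-1 *: \sum_g (chi_val chi g *: U g).

Definition in_Hchi (chi : charT m) (v : 'cV[algC]_(2 ^ n)) : Prop :=
  exists u, v = P_chi chi *m u.

Definition in_Cchi (chi : charT m) (E : 'M[algC]_(2 ^ n)) : Prop :=
  pauli_group E /\ forall g, U g *m E *m adj (U g) = chi_val chi g *: E.

Definition correctable_with (N : nat) (E : 'I_N -> 'M[algC]_(2 ^ n))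
    (C : 'M[algC]_N) : Prop :=
  adj C = C /\
  forall i j, Pi_pn *m adj (E i) *m E j *m Pi_pn = C i j *: Pi_pn.

Definition maximal_correctable (N : nat) (E : 'I_N -> 'M[algC]_(2 ^ n)) : Prop :=
  exists C : 'M[algC]_N, correctable_with E C /\ \rank C = (2 ^ m)%N.

(* A frame field of charge chi: an isometry H_pn -> H_chi
   (represented by a matrix whose action off H_pn is irrelevant). *)
Definition frame_field (chi : charT m) (R : 'M[algC]_(2 ^ n)) : Prop :=
  (forall psi, in_pn psi -> in_Hchi chi (R *m psi)) /\
  (forall psi phi, in_pn psi -> in_pn phi ->
     inner (R *m psi) (R *m phi) = inner psi phi).

Definition complete_frame (R : charT m -> 'M[algC]_(2 ^ n)) : Prop :=
  forall chi, is_char chi -> chi != chi1 m -> frame_field chi (R chi).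

Definition Rext (R : charT m -> 'M[algC]_(2 ^ n)) (chi : charT m) : 'M[algC]_(2 ^ n) :=
  if chi == chi1 m then 1%:M else R chi.

Definition adapted (N : nat) (E : 'I_N -> 'M[algC]_(2 ^ n))
    (R : charT m -> 'M[algC]_(2 ^ n)) : Prop :=
  forall chi, is_char chi -> chi != chi1 m ->
    exists i : 'I_N, in_Cchi chi (E i) /\
      exists eta : algC, `|eta| = 1 /\
        forall psi, in_pn psi -> R chi *m psi = eta *: (E i *m psi).

End Code.

(* Regular representation of G on C^{|G|} (basis e_h, g . e_h = e_{g+h}). *)
Definition reg_repr (m : nat) (g : grp m) : 'M[algC]_(#|grp m|) :=
  \matrix_(a, b) (enum_val a == g + enum_val b)%:R.

(* Frame-dependent tensor product: H_pn \otimes H_gauge (H_gauge = C^d) is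
   modelled as the matrices M : 'M_(2^n, d) whose columns lie in H_pn, the
   elementary tensor psi \otimes w being psi *m w^T. *)
Definition tensR {N d : nat} (L : {linear 'M[algC]_(N, d) -> 'cV[algC]_N})
    (psi : 'cV[algC]_N) (w : 'cV[algC]_d) : 'cV[algC]_N :=
  L (psi *m w^T).

(* Main.v *)
Require Import Defs.
From HB Require Import structures.
From mathcomp Require Import all_boot all_order all_algebra all_field.
From Stdlib Require Import Classical.
Import Order.TTheory GRing.Theory Num.Theory.
Local Open Scope ring_scope.

Set Implicit Arguments. Unset Strict Implicit. Unset Printing Implicit Defensive.

Lemma adj_mul m p q (A : 'M[algC]_(m, p)) (B : 'M[algC]_(p, q)) :
  adj (A *m B) = adj B *m adj A.
Proof. by rewrite /adj map_mxM trmx_mul. Qed.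

Lemma adj_scale m p (c : algC) (A : 'M[algC]_(m, p)) : adj (c *: A) = c^* *: adj A.
Proof. by rewrite /adj map_mxZ linearZ. Qed.

Lemma adj_one m : adj (1%:M : 'M[algC]_m) = 1%:M.
Proof. by rewrite /adj map_mx1 trmx1. Qed.

Lemma adj_invol m p (A : 'M[algC]_(m, p)) : adj (adj A) = A.
Proof. by apply/matrixP => i j; rewrite /adj !mxE conjCK. Qed.

Lemma sum_double (G : nat -> algC) k :
  \sum_(0 <= i < k.*2) G i = \sum_(0 <= i < k) (G i.*2 + G i.*2.+1).
Proof.
elim: k => [|k IH]; first by rewrite !big_geq.
rewrite doubleS !big_nat_recr //= IH addrA.
reflexivity.
Qed.

Lemma bitS j a : bit j.+1 a = bit j a./2.
Proof. by rewrite /bit expnS divnMA divn2. Qed.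

Lemma bit0 a : bit 0 a = odd a.
Proof. by rewrite /bit expn0 divn1. Qed.

Lemma sum_bits n (f : 'I_n -> bool -> algC) :
  \sum_(c < 2 ^ n) \prod_(j < n) f j (bit j c) = \prod_(j < n) (f j false + f j true).
Proof.
elim: n f => [|n IH] f.
  by rewrite expn0 big_ord1 !big_ord0.
rewrite -(big_mkord xpredT (fun c => \prod_(j < n.+1) f j (bit j c))).
rewrite expnS mul2n sum_double big_ord_recl /=.
rewrite -(IH (fun j => f (lift ord0 j))) -(big_mkord xpredT (fun c => \prod_(j < n) f (lift ord0 j) (bit j c))) mulr_sumr.
apply: eq_bigr => i _; rewrite !big_ord_recl /= !bit0 odd_double /= mulrDl.
congr (_ * _ + _ * _); rewrite ?odd_double //; apply: eq_bigr => j _;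
  by rewrite /bump /= add1n bitS /= ?doubleK ?uphalf_double.
Qed.

Lemma bits_eq n a b : (a < 2 ^ n)%N -> (b < 2 ^ n)%N ->
  (forall j, (j < n)%N -> bit j a = bit j b) -> a = b.
Proof.
elim: n a b => [|n IH] a b.
  by rewrite expn0 !ltnS !leqn0 => /eqP -> /eqP ->.
move=> Ha Hb H.
rewrite -[a]odd_double_half -[b]odd_double_half.
have := H 0%N isT; rewrite !bit0 => ->.
congr (_ + _.*2)%N; apply: IH.
- by rewrite ltn_half_double -mul2n -expnS.
- by rewrite ltn_half_double -mul2n -expnS.
move=> j Hj; by rewrite -!bitS H.
Qed.

Lemma sigma_unit p r s : (sigma p false r)^* * sigma p false s + (sigma p true r)^* * sigma p true s = (r == s)%:R.
Proof.
case: p => -[|[|[|[|]]]] Hp //; case: r; case: s; rewrite /sigma /= ?conjCi ?rmorph0 ?rmorph1 ?rmorphN ?conjCi ?mul0r ?mulr0 ?mul1r ?mulr1 ?add0r ?addr0 ?mulNr ?mulrN ?opprK //.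
all: try by rewrite -normCKC ?normCi ?normr1 expr1n.
all: by rewrite -expr2 sqrCi opprK.
Qed.

Lemma pauli_string_unitary n (p : n.-tuple 'I_4) :
  adj (pauli_string p) *m pauli_string p = 1%:M.
Proof.
apply/matrixP => a b; rewrite !mxE.
under eq_bigr => c _ do rewrite /adj !mxE rmorph_prod -big_split /=.
rewrite (sum_bits (fun j x => (sigma (tnth p j) x (bit j a))^* * sigma (tnth p j) x (bit j b))).
under eq_bigr => j _ do rewrite sigma_unit.
case: (a =P b) => [->|neq].
  by rewrite big1 // => j _; rewrite eqxx.
have [j Hj] : exists j : 'I_n, bit j a != bit j b.
  apply/existsP; apply: contraT; rewrite negb_exists => /forallP H.
  case: neq; apply/val_inj/(@bits_eq n); rewrite ?ltn_ord // => j Hj.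
  by have := H (Ordinal Hj); rewrite negbK => /eqP.
by rewrite (bigD1 j) //= (negbTE Hj) mul0r.
Qed.

Lemma pauli_unitary n (P : 'M[algC]_(2 ^ n)) : pauli_group P -> adj P *m P = 1%:M.
Proof.
case=> c [p ->]; rewrite adj_scale -scalemxAl -scalemxAr scalerA pauli_string_unitary.
by rewrite -normCKC normrX normCi !expr1n scale1r.
Qed.

Lemma unitaryC n (P : 'M[algC]_n) : adj P *m P = 1%:M -> P *m adj P = 1%:M.
Proof. by move=> H; apply: mulmx1C. Qed.

Lemma F2_cases (x : 'F_2) : x = 0 \/ x = 1.
Proof. case: x => -[|[|]] //= H; [left|right]; exact: val_inj. Qed.

Lemma F2_addeq1 (x y : 'F_2) : (x + y == 1) = (x == 1) (+) (y == 1).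
Proof. by case: (F2_cases x) => ->; case: (F2_cases y) => ->. Qed.

Lemma F2_nat (b : bool) : ((b%:R : 'F_2) == 1) = b.
Proof. by case: b. Qed.

Lemma F2_eq1 (x : 'F_2) : ((x == 1)%:R : 'F_2) = x.
Proof. by case: (F2_cases x) => ->. Qed.

Section Chars.
Variable m : nat.
Implicit Types (chi : charT m) (g h : grp m).

Lemma charD chi g h : is_char chi -> chi (g + h) = chi g (+) chi h.
Proof. by move/forallP => /(_ g) /forallP /(_ h) /eqP. Qed.

Lemma char0 chi : is_char chi -> chi 0 = false.
Proof. by move=> H; have := charD 0 0 H; rewrite addr0; case: (chi 0). Qed.

Lemma chi_valD chi g h : is_char chi ->
  chi_val chi (g + h) = chi_val chi g * chi_val chi h.
Proof. by move=> H; rewrite /chi_val charD // signr_addb. Qed.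

Lemma chi_val_sq chi g : chi_val chi g * chi_val chi g = 1.
Proof. by rewrite /chi_val -signr_addb addbb. Qed.

Lemma chi_val_conj chi g : (chi_val chi g)^* = chi_val chi g.
Proof. by rewrite /chi_val rmorph_sign. Qed.

Lemma chi_val_norm chi g : `|chi_val chi g| = 1.
Proof. by rewrite /chi_val normr_sign. Qed.

Lemma chi1_char : is_char (chi1 m).
Proof. by apply/forallP => g; apply/forallP => h; rewrite !ffunE. Qed.

Lemma chi1_val g : chi_val (chi1 m) g = 1.
Proof. by rewrite /chi_val ffunE. Qed.

Lemma sum_sign_zero (T : finType) (f : T -> bool) (hh : T -> T) :
  injective hh -> (forall x, f (hh x) = ~~ f x) ->
  \sum_x ((-1) ^+ f x : algC) = 0.
Proof.
move=> inj Hf; set S := \sum_x _.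
have : S = - S.
  rewrite {1}/S (reindex_inj inj) /= /S -sumrN.
  by apply: eq_bigr => x _; rewrite Hf signrN.
move/eqP; rewrite -addr_eq0 -mulr2n => /eqP/eqP; rewrite mulrn_eq0 /= => /eqP //.
Qed.

Lemma card_grp : #|grp m| = (2 ^ m)%N.
Proof. by rewrite card_mx card_Fp // mul1n. Qed.

Lemma char_orth chi chi' : is_char chi -> is_char chi' ->
  \sum_g chi_val chi g * chi_val chi' g = if chi == chi' then #|grp m|%:R else 0.
Proof.
move=> Hc Hc'; case: eqP => [<-|neq].
  by under eq_bigr => g _ do rewrite chi_val_sq; rewrite sumr_const.
have [g0 Hg0] : exists g0, chi g0 != chi' g0.
  apply/existsP; apply: contraT; rewrite negb_exists => /forallP H.
  by case: neq; apply/ffunP => g; have := H g; rewrite negbK => /eqP.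
under eq_bigr => g _ do rewrite /chi_val -signr_addb.
apply: (@sum_sign_zero _ (fun g => chi g (+) chi' g) (fun g => g + g0)).
  exact: addIr.
move=> x; rewrite !charD //.
move: Hg0; case: (chi g0); case: (chi' g0) => //= _;
  by case: (chi x); case: (chi' x).
Qed.

Definition chi_a (a : grp m) : charT m := [ffun v : grp m => (v *m a^T) 0 0 == 1].

Lemma chi_a_char a : is_char (chi_a a).
Proof.
apply/forallP => g; apply/forallP => h; rewrite !ffunE mulmxDl mxE.
by rewrite F2_addeq1.
Qed.

Lemma delta_mul_tr (a : grp m) j : ((delta_mx 0 j : grp m) *m a^T) 0 0 = a 0 j.
Proof. by rewrite -(rowE j a^T) !mxE. Qed.

Lemma mul_delta_tr (a : grp m) j : (a *m (delta_mx 0 j : grp m)^T) 0 0 = a 0 j.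
Proof. by rewrite trmx_delta -(colE j a) !mxE. Qed.

Lemma chi_a_delta a j : chi_a a (delta_mx 0 j) = (a 0 j == 1).
Proof. by rewrite ffunE delta_mul_tr. Qed.

Lemma char_ext chi chi' : is_char chi -> is_char chi' ->
  (forall j, chi (delta_mx 0 j) = chi' (delta_mx 0 j)) -> chi = chi'.
Proof.
move=> Hc Hc' H; apply/ffunP => v; rewrite [v]row_sum_delta.
apply: (big_ind (fun w => chi w = chi' w)).
- by rewrite !char0.
- by move=> x y Hx Hy; rewrite !charD // Hx Hy.
move=> j _; case: (F2_cases (v 0 j)) => ->.
  by rewrite scale0r !char0.
by rewrite scale1r H.
Qed.

Definition achi chi : grp m := \row_j ((chi (delta_mx 0 j))%:R : 'F_2).

Lemma chi_aK chi : is_char chi -> chi_a (achi chi) = chi.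
Proof.
move=> Hc; apply: char_ext => //; first exact: chi_a_char.
by move=> j; rewrite chi_a_delta mxE F2_nat.
Qed.

Lemma achiK a : achi (chi_a a) = a.
Proof. by apply/matrixP => i j; rewrite !mxE ord1 chi_a_delta F2_eq1. Qed.

Lemma chi_a_inj : injective chi_a.
Proof. exact: can_inj achiK. Qed.

Lemma sum_chars g :
  \sum_a chi_val (chi_a a) g = if g == 0 then #|grp m|%:R else 0.
Proof.
case: eqP => [->|neq].
  under eq_bigr => a _ do rewrite /chi_val ffunE mul0mx mxE eq_sym oner_eq0 expr0.
  by rewrite sumr_const.
have [j Hj] : exists j, g 0 j != 0.
  apply/existsP; apply: contraT; rewrite negb_exists => /forallP H.
  case: neq; apply/matrixP => i j; rewrite ord1 mxE.
  by have := H j; rewrite negbK => /eqP.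
apply: (@sum_sign_zero _ (fun a => chi_a a g) (fun a => a + delta_mx 0 j)).
  exact: addIr.
move=> a; rewrite !ffunE linearD /= mulmxDr mxE F2_addeq1 mul_delta_tr.
by case: (F2_cases (g 0 j)) Hj => -> //= _; rewrite addbT.
Qed.

Definition gv (j : 'I_(2 ^ m)) : grp m := enum_val (cast_ord (esym card_grp) j).
Definition gi (x : grp m) : 'I_(2 ^ m) := cast_ord card_grp (enum_rank x).

Lemma gvK : cancel gv gi.
Proof. by move=> j; rewrite /gv /gi enum_valK cast_ordKV. Qed.

Lemma giK : cancel gi gv.
Proof. by move=> x; rewrite /gv /gi cast_ordK enum_rankK. Qed.

Definition charof (j : 'I_(2 ^ m)) : charT m := chi_a (gv j).

Lemma charof_char j : is_char (charof j).
Proof. exact: chi_a_char. Qed.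

Lemma charof_inj : injective charof.
Proof. by move=> i j /chi_a_inj /(can_inj gvK). Qed.

Definition cidx chi : 'I_(2 ^ m) := gi (achi chi).

Lemma cidxK chi : is_char chi -> charof (cidx chi) = chi.
Proof. by move=> H; rewrite /charof /cidx giK chi_aK. Qed.

Lemma charofK j : cidx (charof j) = j.
Proof. by rewrite /cidx /charof achiK gvK. Qed.

Lemma sum_charof g :
  \sum_j chi_val (charof j) g = if g == 0 then #|grp m|%:R else 0.
Proof.
rewrite -sum_chars (reindex gv) //; exists gi => x _; [exact: gvK|exact: giK].
Qed.

End Chars.

Lemma innerE N (u v : 'cV[algC]_N) : inner u v = \sum_i (u i 0)^* * v i 0.
Proof. by rewrite /inner /adj mxE; apply: eq_bigr => i _; rewrite !mxE. Qed.

Lemma inner_unitary N (A : 'M[algC]_N) u v : adj A *m A = 1%:M ->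
  inner (A *m u) (A *m v) = inner u v.
Proof. by move=> H; rewrite /inner adj_mul mulmxA -(mulmxA (adj u)) H mulmx1. Qed.

Lemma innerZ N (c : algC) (u v : 'cV[algC]_N) :
  inner (c *: u) (c *: v) = `|c| ^+ 2 * inner u v.
Proof. by rewrite /inner adj_scale -scalemxAl -scalemxAr scalerA mxE mxE normCKC. Qed.

Lemma inner_eq0 N (u : 'cV[algC]_N) : inner u u = 0 -> u = 0.
Proof.
rewrite innerE => /eqP; rewrite psumr_eq0 => [/allP H|i _]; last first.
  by rewrite -normCKC exprn_ge0.
apply/matrixP => i j; rewrite ord1 mxE.
have := H i (mem_index_enum _); rewrite -normCKC /= sqrf_eq0 normr_eq0 => /eqP //.
Qed.

Section Code.
Variables (n m : nat) (U : grp m -> 'M[algC]_(2 ^ n)).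
Hypothesis U_pauli : forall g, pauli_group (U g).
Hypothesis U_hom : forall g h, U (g + h) = U g *m U h.
Hypothesis U_one : U 0 = 1%:M.

Lemma U_unit g : adj (U g) *m U g = 1%:M.
Proof. exact: pauli_unitary. Qed.

Lemma U_unitC g : U g *m adj (U g) = 1%:M.
Proof. exact/unitaryC/U_unit. Qed.

Lemma card_neq0 : (#|grp m|%:R : algC) != 0.
Proof. by rewrite pnatr_eq0 card_grp expn_eq0. Qed.

Lemma UP chi g : is_char chi -> U g *m P_chi U chi = chi_val chi g *: P_chi U chi.
Proof.
move=> Hc; rewrite /P_chi -scalemxAr scalerA mulrC -scalerA; congr (_ *: _).
rewrite mulmx_sumr [in RHS](reindex_inj (addrI g)) /= scaler_sumr.
apply: eq_bigr => h _.
by rewrite -scalemxAr -U_hom chi_valD // !scalerA mulrA chi_val_sq mul1r.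
Qed.

Lemma Hchi_eigen chi v : is_char chi ->
  in_Hchi U chi v <-> forall g, U g *m v = chi_val chi g *: v.
Proof.
move=> Hc; split.
  by case=> u -> g; rewrite mulmxA UP // scalemxAl.
move=> H; exists v; rewrite /P_chi -scalemxAl mulmx_suml.
under eq_bigr => g _ do rewrite -scalemxAl H scalerA chi_val_sq scale1r.
by rewrite sumr_const -scaler_nat scalerA mulVf ?card_neq0 // scale1r.
Qed.

Lemma pn_eigen psi : in_pn U psi <-> in_Hchi U (chi1 m) psi.
Proof.
split => H.
  by apply/Hchi_eigen; [exact: chi1_char|] => g; rewrite H chi1_val scale1r.
by move=> g; move/Hchi_eigen: H => /(_ (chi1_char m) g) ->; rewrite chi1_val scale1r.
Qed.

Lemma P_on chi chi' v : is_char chi -> is_char chi' -> in_Hchi U chi' v ->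
  P_chi U chi *m v = (chi == chi')%:R *: v.
Proof.
move=> Hc Hc' /(Hchi_eigen _ Hc') H.
rewrite /P_chi -scalemxAl mulmx_suml.
under eq_bigr => g _ do rewrite -scalemxAl H scalerA.
rewrite -scaler_suml char_orth // scalerA; case: eqP => _.
  by rewrite mulVf ?card_neq0.
by rewrite mulr0.
Qed.

Lemma Pi_on psi : in_pn U psi -> Pi_pn U *m psi = psi.
Proof.
move=> /pn_eigen H.
have -> : Pi_pn U = P_chi U (chi1 m).
  by rewrite /Pi_pn /P_chi; congr (_ *: _); apply: eq_bigr => g _; rewrite chi1_val scale1r.
by rewrite (@P_on _ (chi1 m)) ?chi1_char // eqxx scale1r.
Qed.

Section Err.
Variables (chi : charT m) (E : 'M[algC]_(2 ^ n)).
Hypothesis Hc : is_char chi.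
Hypothesis E_unit : adj E *m E = 1%:M.
Hypothesis E_rel : forall g, U g *m E *m adj (U g) = chi_val chi g *: E.

Lemma E_comm g : U g *m E = chi_val chi g *: (E *m U g).
Proof. by rewrite -[LHS]mulmx1 -(U_unit g) mulmxA E_rel -scalemxAl. Qed.

Lemma E_to psi : in_pn U psi -> in_Hchi U chi (E *m psi).
Proof.
move=> H; apply/Hchi_eigen => // g.
by rewrite mulmxA E_comm -scalemxAl -mulmxA H.
Qed.

Lemma Eadj_comm g : U g *m adj E = chi_val chi g *: (adj E *m U g).
Proof.
have H : U g *m adj E *m adj (U g) = chi_val chi g *: adj E.
  by have := congr1 adj (E_rel g); rewrite !adj_mul adj_invol adj_scale chi_val_conj mulmxA.
by rewrite -[LHS]mulmx1 -(U_unit g) mulmxA H -scalemxAl.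
Qed.

Lemma Eadj_from v : in_Hchi U chi v -> in_pn U (adj E *m v).
Proof.
move=> /(Hchi_eigen _ Hc) H g.
by rewrite mulmxA Eadj_comm -scalemxAl -mulmxA H -scalemxAr scalerA chi_val_sq scale1r.
Qed.

End Err.
End Code.

Definition Lfun N d (F : 'I_d -> 'M[algC]_N) (M : 'M[algC]_(N, d)) : 'cV[algC]_N :=
  \sum_j F j *m col j M.

Lemma Lfun_lin N d (F : 'I_d -> 'M[algC]_N) : linear (Lfun F).
Proof.
move=> a M M'; rewrite /Lfun scaler_sumr -big_split /=; apply: eq_bigr => j _.
by rewrite linearP /= mulmxDr scalemxAr.
Qed.

HB.instance Definition _ N d F := GRing.isLinear.Build algC _ _ _ (@Lfun N d F) (Lfun_lin F).

Lemma col_tens N d (psi : 'cV[algC]_N) (w : 'cV[algC]_d) j :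
  col j (psi *m w^T) = w j 0 *: psi.
Proof. by apply/matrixP => a b; rewrite !mxE big_ord1 !mxE mulrC (ord1 b). Qed.

Lemma tensR_E N d (F : 'I_d -> 'M[algC]_N) psi w :
  tensR (Lfun F) psi w = \sum_j w j 0 *: (F j *m psi).
Proof. by rewrite /tensR /Lfun; apply: eq_bigr => j _; rewrite col_tens scalemxAr. Qed.

Lemma tensR_delta N d (F : 'I_d -> 'M[algC]_N) psi j :
  tensR (Lfun F) psi (delta_mx j 0) = F j *m psi.
Proof.
rewrite tensR_E (bigD1 j) //= big1 ?addr0 => [|i /negbTE ni]; rewrite mxE ?eqxx ?ni ?scale1r //.
by rewrite scale0r.
Qed.

Section Main.
Variables (n m : nat) (U : grp m -> 'M[algC]_(2 ^ n)).
Hypothesis U_pauli : forall g, pauli_group (U g).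
Hypothesis U_hom : forall g h, U (g + h) = U g *m U h.
Hypothesis U_one : U 0 = 1%:M.
Variables (NE : nat) (E : 'I_NE -> 'M[algC]_(2 ^ n)).
Hypothesis E_pauli : forall i, pauli_group (E i).
Hypothesis E_id : exists i, E i = 1%:M.
Variable R : charT m -> 'M[algC]_(2 ^ n).
Hypothesis R_adapted : adapted U E R.

Lemma pn_scale c psi : in_pn U psi -> in_pn U (c *: psi).
Proof. by move=> H g; rewrite -scalemxAr H. Qed.

Lemma Hchi_scale chi c v : in_Hchi U chi v -> in_Hchi U chi (c *: v).
Proof. by case=> u ->; exists (c *: u); rewrite scalemxAr. Qed.

Lemma Rext_E chi : is_char chi -> exists j : 'I_NE, exists eta : algC,
  [/\ `|eta| = 1, adj (E j) *m E j = 1%:M,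
      (forall g, U g *m E j *m adj (U g) = chi_val chi g *: E j) &
      forall psi, in_pn U psi -> Rext R chi *m psi = eta *: (E j *m psi)].
Proof.
move=> Hc; case: (eqVneq chi (chi1 m)) => [->|neq].
  case: E_id => j Ej; exists j, 1; split.
  - exact: normr1.
  - by rewrite Ej adj_one mulmx1.
  - by move=> g; rewrite Ej mulmx1 (U_unitC U_pauli) chi1_val scale1r.
  by move=> psi _; rewrite /Rext eqxx Ej !mul1mx scale1r.
case: (R_adapted Hc neq) => j [[_ HC] [eta [Heta HR]]].
exists j, eta; split => //; first exact: pauli_unitary.
by move=> psi Hpsi; rewrite /Rext (negbTE neq) HR.
Qed.

Lemma Rext_Hchi chi psi : is_char chi -> in_pn U psi -> in_Hchi U chi (Rext R chi *m psi).
Proof.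
move=> Hc Hp; case: (Rext_E Hc) => j [eta [_ Hu Hr ->]] //.
by apply: Hchi_scale; apply: (E_to U_pauli U_hom Hc Hr).
Qed.

Lemma Rext_iso chi psi : is_char chi -> in_pn U psi ->
  inner (Rext R chi *m psi) (Rext R chi *m psi) = inner psi psi.
Proof.
move=> Hc Hp; case: (Rext_E Hc) => j [eta [He Hu Hr ->]] //.
by rewrite innerZ He expr1n mul1r inner_unitary.
Qed.

Lemma Rext_onto chi v : is_char chi -> in_Hchi U chi v ->
  exists psi, in_pn U psi /\ Rext R chi *m psi = v.
Proof.
move=> Hc Hv; case: (Rext_E Hc) => j [eta [He Hu Hr HR]].
have Hp : in_pn U (eta^-1 *: (adj (E j) *m v)).
  by apply: pn_scale; apply: (Eadj_from U_pauli U_hom Hc Hr).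
exists (eta^-1 *: (adj (E j) *m v)); split => //.
have eta0 : eta != 0 by rewrite -normr_eq0 He oner_eq0.
rewrite HR // -scalemxAr scalerA mulfV // scale1r mulmxA unitaryC // mul1mx //.
Qed.

Definition Fm (j : 'I_(2 ^ m)) := Rext R (charof j).
Definition LL := Lfun Fm.

Lemma col_pn (M : 'M[algC]_(2 ^ n, 2 ^ m)) j :
  (forall g, U g *m M = M) -> in_pn U (col j M).
Proof. by move=> H g; rewrite colE mulmxA H. Qed.

Lemma Psum : \sum_j P_chi U (charof j) = 1%:M.
Proof.
rewrite /P_chi -scaler_sumr.
rewrite exchange_big /=.
under eq_bigr => g _ do rewrite -scaler_suml sum_charof.
rewrite (bigD1 0) //= eqxx big1 ?addr0 => [|g /negbTE ->]; last by rewrite scale0r.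
by rewrite U_one scalerA mulVf ?card_neq0 // scale1r.
Qed.

Lemma LL_inj (M M' : 'M[algC]_(2 ^ n, 2 ^ m)) :
  (forall g, U g *m M = M) -> (forall g, U g *m M' = M') -> LL M = LL M' -> M = M'.
Proof.
move=> HM HM' HL.
suff: M - M' = 0 by move/eqP; rewrite subr_eq0 => /eqP.
set D := M - M'.
have HD : forall g, U g *m D = D by move=> g; rewrite mulmxBr HM HM'.
have HL0 : Lfun Fm D = 0 by rewrite /D linearB /=; move: HL; rewrite /LL => ->; rewrite subrr.
have HF : forall j, in_Hchi U (charof j) (Fm j *m col j D).
  by move=> j; apply: Rext_Hchi; [exact: charof_char| exact: col_pn].
have Hc : forall i, col i D = 0.
  move=> i.
  have HP : forall j, P_chi U (charof i) *m (Fm j *m col j D) = (i == j)%:R *: (Fm j *m col j D).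
    move=> j; rewrite (@P_on _ _ _ U_hom (charof i) (charof j)) ?charof_char ?HF //.
    by rewrite (inj_eq (@charof_inj m)).
  have Hp : in_pn U (col i D) by exact: col_pn.
  apply: inner_eq0; rewrite -(@Rext_iso (charof i)) ?charof_char //.
  have := congr1 (fun x => P_chi U (charof i) *m x) HL0.
  rewrite /= mulmx0 /Lfun mulmx_sumr (bigD1 i) //= big1 ?addr0 => [|j nj]; last first.
    by rewrite HP eq_sym (negbTE nj) scale0r.
  by rewrite HP eqxx scale1r /Fm => ->; rewrite /inner mulmx0 mxE.
apply/matrixP => a b; move/matrixP: (Hc b) => /(_ a 0).
by rewrite !mxE.
Qed.

Lemma LL_onto v : exists M, (forall g, U g *m M = M) /\ LL M = v.
Proof.
have H : forall j, exists psi, in_pn U psi /\ Fm j *m psi = P_chi U (charof j) *m v.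
  move=> j; apply: Rext_onto; first exact: charof_char.
  by exists v.
case: (fin_all_exists H) => psi Hpsi.
exists (\matrix_(a, j) psi j a 0); split.
  move=> g; apply/matrixP => a j; rewrite !mxE.
  move/matrixP: ((Hpsi j).1 g) => /(_ a 0); rewrite mxE => <-.
  by apply: eq_bigr => b _; rewrite mxE.
rewrite /LL /Lfun.
have -> : v = (\sum_j P_chi U (charof j)) *m v by rewrite Psum mul1mx.
rewrite mulmx_suml; apply: eq_bigr => j _; rewrite -(Hpsi j).2; congr (_ *m _).
by apply/matrixP => a b; rewrite !mxE (ord1 b).
Qed.

End Main.

Section Gauge.
Variable m : nat.

Lemma chi_valN (chi : charT m) g : is_char chi -> chi_val chi (- g) = chi_val chi g.
Proof.
move=> Hc; have H := chi_valD (- g) g Hc; rewrite addNr {1}/chi_val char0 // expr0 in H.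
by rewrite -[LHS]mulr1 -(chi_val_sq chi g) mulrA -H mul1r.
Qed.

Definition UR (g : grp m) : 'M[algC]_(2 ^ m) := diag_mx (\row_j chi_val (charof j) g).

Lemma UR_hom g h : UR (g + h) = UR g *m UR h.
Proof.
rewrite /UR mulmx_diag; congr diag_mx; apply/matrixP => i j.
by rewrite !mxE chi_valD // charof_char.
Qed.

Lemma UR_one : UR 0 = 1%:M.
Proof.
by apply/matrixP => i j; rewrite /UR !mxE /chi_val char0 ?charof_char // expr0.
Qed.

Lemma UR_unit g : adj (UR g) *m UR g = 1%:M.
Proof.
apply/matrixP => i j; rewrite /UR mul_mx_diag !mxE /adj.
rewrite eq_sym; case: eqP => _; last by rewrite mulr0n rmorph0 mul0r.
by rewrite mulr1n chi_val_conj chi_val_sq.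
Qed.

Definition Smx : 'M[algC]_(#|grp m|, 2 ^ m) :=
  \matrix_(a, j) chi_val (charof j) (enum_val a).

Lemma sum_enum (F : grp m -> algC) : \sum_(a < #|grp m|) F (enum_val a) = \sum_x F x.
Proof.
rewrite (reindex (@enum_rank (grp m))) /=; last first.
  by apply: onW_bij; exact: enum_rank_bij.
by apply: eq_bigr => x _; rewrite enum_rankK.
Qed.

Lemma S_inter g : Smx *m UR g = reg_repr g *m Smx.
Proof.
apply/matrixP => a j; rewrite /UR mul_mx_diag !mxE.
under eq_bigr => b _ do rewrite !mxE.
rewrite (sum_enum (fun y => (enum_val a == g + y)%:R * chi_val (charof j) y)).
rewrite (bigD1 (enum_val a - g)) //= big1 => [|y ny]; last first.
  case: eqP => [Hy|]; last by rewrite mul0r.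
  by case/eqP: ny; rewrite Hy [g + y]addrC addrK.
by rewrite [g + _]addrC subrK eqxx mul1r addr0 chi_valD ?chi_valN ?charof_char.
Qed.

Lemma S_rank : \rank Smx = (2 ^ m)%N.
Proof.
have HS : Smx^T *m Smx = (#|grp m|%:R)%:M.
  apply/matrixP => i j; rewrite !mxE.
  under eq_bigr => a _ do rewrite !mxE.
  rewrite (sum_enum (fun x => chi_val (charof i) x * chi_val (charof j) x)).
  rewrite char_orth ?charof_char // (inj_eq (@charof_inj m)).
  by case: eqP.
apply/eqP; rewrite eqn_leq rank_leq_col /=.
have := mxrankM_maxr Smx^T Smx; rewrite HS -scalemx1 mxrank_scale_nz ?card_neq0 //.
by rewrite mxrank1.
Qed.

Definition ket (chi : charT m) : 'cV[algC]_(2 ^ m) := delta_mx (@cidx m chi) 0.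

Lemma cidx_eq chi chi' : is_char chi -> is_char chi' ->
  (@cidx m chi == @cidx m chi') = (chi == chi').
Proof.
move=> Hc Hc'; apply/eqP/eqP => [H|->//].
by rewrite -(cidxK Hc) -(cidxK Hc') H.
Qed.

Lemma ket_orth chi chi' : is_char chi -> is_char chi' ->
  inner (ket chi) (ket chi') = (chi == chi')%:R.
Proof.
move=> Hc Hc'; rewrite innerE (bigD1 (@cidx m chi)) //= big1 => [|k nk]; last first.
  by rewrite !mxE (negbTE nk) /= rmorph0 mul0r.
by rewrite !mxE !eqxx /= rmorph1 mul1r addr0 cidx_eq // andbT.
Qed.

Lemma ket_span w : exists c : charT m -> algC,
  w = \sum_(chi | is_char chi) c chi *: ket chi.
Proof.
exists (fun chi => w (@cidx m chi) 0).
rewrite (reindex (@charof m)) /=; last first.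
  by exists (@cidx m) => [j _|chi Hc]; [exact: charofK|exact: cidxK].
rewrite (eq_bigl xpredT) => [|j]; last by rewrite charof_char.
apply/matrixP => a b; rewrite summxE (bigD1 a) //= big1 => [|j nj]; last first.
  by rewrite !mxE (@charofK m) eq_sym (negbTE nj) mulr0.
by rewrite !mxE (@charofK m) !eqxx (ord1 b) mulr1 addr0.
Qed.

End Gauge.

Section Main2.
Variables (n m : nat) (U : grp m -> 'M[algC]_(2 ^ n)).
Hypothesis U_pauli : forall g, pauli_group (U g).
Hypothesis U_hom : forall g h, U (g + h) = U g *m U h.
Hypothesis U_one : U 0 = 1%:M.
Variables (NE : nat) (E : 'I_NE -> 'M[algC]_(2 ^ n)).
Hypothesis E_pauli : forall i, pauli_group (E i).
Hypothesis E_max : maximal_correctable U E.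
Hypothesis E_id : exists i, E i = 1%:M.
Variable R : charT m -> 'M[algC]_(2 ^ n).
Hypothesis R_adapted : adapted U E R.

Let F := Fm R.

Lemma tens_ket chi psi : is_char chi ->
  tensR (Lfun F) psi (ket chi) = Rext R chi *m psi.
Proof. by move=> Hc; rewrite tensR_delta /F /Fm cidxK. Qed.

Lemma Rext1 : Rext R (chi1 m) = 1%:M.
Proof. by rewrite /Rext eqxx. Qed.

Lemma intertw g psi w : in_pn U psi ->
  U g *m tensR (Lfun F) psi w = tensR (Lfun F) psi (UR g *m w).
Proof.
move=> Hp; rewrite !tensR_E mulmx_sumr; apply: eq_bigr => j _.
have := @Rext_Hchi n m U U_pauli U_hom NE E E_pauli E_id R R_adapted (charof j) psi (charof_char j) Hp.
move=> HH; have Heig := proj1 (@Hchi_eigen _ _ _ U_hom (charof j) _ (charof_char j)) HH g.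
by rewrite /UR mul_diag_mx !mxE -scalemxAr /F /Fm Heig scalerA mulrC.
Qed.

Lemma prop2 chi v : is_char chi ->
  in_Hchi U chi v <-> exists psi, in_pn U psi /\ v = tensR (Lfun F) psi (ket chi).
Proof.
move=> Hc; split.
  move=> Hv; case: (@Rext_onto n m U U_pauli U_hom NE E E_pauli E_id R R_adapted chi v Hc Hv) => psi [Hp Hr].
  by exists psi; rewrite tens_ket.
case=> psi [Hp ->]; rewrite tens_ket //.
exact: (@Rext_Hchi n m U U_pauli U_hom NE E E_pauli E_id R R_adapted chi psi Hc Hp).
Qed.

Lemma prop3 chi psi : is_char chi -> in_pn U psi ->
  Rext R chi *m tensR (Lfun F) psi (ket (chi1 m)) = tensR (Lfun F) psi (ket chi).
Proof.
by move=> Hc Hp; rewrite !tens_ket ?chi1_char // Rext1 mul1mx.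
Qed.

Lemma prop4 chi i : is_char chi -> in_Cchi U chi (E i) ->
  exists eta : algC, `|eta| = 1 /\
    forall psi, in_pn U psi ->
      E i *m tensR (Lfun F) psi (ket (chi1 m)) = eta *: tensR (Lfun F) psi (ket chi).
Proof.
move=> Hc [_ HCi].
case: (@Rext_E n m U U_pauli NE E E_pauli E_id R R_adapted chi Hc) => j [etaj [Hej Huj Hrj HRj]].
case: E_max => C [[_ HC] _].
have Hui : adj (E i) *m E i = 1%:M by exact: pauli_unitary.
have key : forall psi, in_pn U psi -> E i *m psi = C j i *: (E j *m psi).
  move=> psi Hp.
  have H1 := E_to U_pauli U_hom Hc HCi Hp.
  have H2 := Eadj_from U_pauli U_hom Hc Hrj H1.
  rewrite -[LHS]mul1mx -(unitaryC Huj) -mulmxA.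
  rewrite -(Pi_on U_hom H2) -{1}(Pi_on U_hom Hp).
  have := congr1 (fun X => E j *m X *m psi) (HC j i); rewrite /= !mulmxA => ->.
  by rewrite -scalemxAr -scalemxAl -mulmxA Pi_on.
have etaj0 : etaj != 0 by rewrite -normr_eq0 Hej oner_eq0.
have key2 : forall psi, in_pn U psi ->
    E i *m tensR (Lfun F) psi (ket (chi1 m)) = (C j i / etaj) *: tensR (Lfun F) psi (ket chi).
  move=> psi Hp; rewrite !tens_ket ?chi1_char // Rext1 mul1mx key // HRj //.
  by rewrite scalerA -mulrA mulVf // mulr1.
case: (classic (exists psi0, in_pn U psi0 /\ psi0 != 0)) => [[psi0 [Hp0 nz0]]|Hno].
  exists (C j i / etaj); split => //.
  rewrite normrM normrV ?unitfE // Hej invr1 mulr1.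
  have Hin : inner psi0 psi0 != 0.
    by apply: contra nz0 => /eqP /inner_eq0 ->.
  have := inner_unitary psi0 psi0 Hui.
  rewrite key // innerZ inner_unitary // => /eqP.
  rewrite -subr_eq0 -{2}[inner _ _]mul1r -mulrBl mulf_eq0 (negbTE Hin) orbF subr_eq0.
  by rewrite sqrp_eq1 // => /eqP.
exists 1; split; first exact: normr1.
move=> psi Hp; have -> : psi = 0.
  by apply: contra_not_eq Hno => nz; exists psi.
by rewrite !tensR_E; rewrite !big1 ?scaler0 ?mulmx0 // => j' _; rewrite mulmx0 scaler0.
Qed.

End Main2.

Unset Implicit Arguments. Set Strict Implicit.

Theorem mainTheorem4
  (n k : nat) (hk : (k < n)%N)
  (U : grp (n - k) -> 'M[algC]_(2 ^ n))
  (U_pauli : forall g, pauli_group (U g))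
  (U_hom : forall g h, U (g + h) = U g *m U h)
  (U_one : U 0 = 1%:M)
  (U_faithful : injective U)
  (U_noneg : forall g, U g != - 1%:M)
  (NE : nat) (E : 'I_NE -> 'M[algC]_(2 ^ n))
  (E_inj : injective E)
  (E_pauli : forall i, pauli_group (E i))
  (E_max : maximal_correctable U E)
  (E_id : exists i, E i = 1%:M)
  (R : charT (n - k) -> 'M[algC]_(2 ^ n))
  (R_complete : complete_frame U R)
  (R_adapted : adapted U E R) :
  exists (L : {linear 'M[algC]_(2 ^ n, 2 ^ (n - k)) -> 'cV[algC]_(2 ^ n)}),
    ((forall M M' : 'M[algC]_(2 ^ n, 2 ^ (n - k)),
        (forall g, U g *m M = M) -> (forall g, U g *m M' = M') ->
        L M = L M' -> M = M') /\
     (forall v : 'cV[algC]_(2 ^ n),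
        exists M, (forall g, U g *m M = M) /\ L M = v)) /\
    (exists UR : grp (n - k) -> 'M[algC]_(2 ^ (n - k)),
      (forall g h, UR (g + h) = UR g *m UR h) /\ UR 0 = 1%:M /\
      (forall g, adj (UR g) *m UR g = 1%:M) /\
      (forall g psi w, in_pn U psi ->
          U g *m tensR L psi w = tensR L psi (UR g *m w)) /\
      (exists S : 'M[algC]_(#|grp (n - k)|, 2 ^ (n - k)),
          \rank S = (2 ^ (n - k))%N /\ \rank S = #|grp (n - k)| /\
          forall g, S *m UR g = reg_repr g *m S)) /\
    (exists ket : charT (n - k) -> 'cV[algC]_(2 ^ (n - k)),
      (forall chi chi', is_char chi -> is_char chi' ->
          inner (ket chi) (ket chi') = (chi == chi')%:R) /\
      (forall w, exists c : charT (n - k) -> algC,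
          w = \sum_(chi | is_char chi) c chi *: ket chi) /\
      (forall chi, is_char chi -> forall v,
          in_Hchi U chi v <-> exists psi, in_pn U psi /\ v = tensR L psi (ket chi)) /\
      (forall chi psi, is_char chi -> in_pn U psi ->
          Rext R chi *m tensR L psi (ket (chi1 (n - k))) = tensR L psi (ket chi)) /\
      (forall chi i, is_char chi -> in_Cchi U chi (E i) ->
          exists eta : algC, `|eta| = 1 /\
            forall psi, in_pn U psi ->
              E i *m tensR L psi (ket (chi1 (n - k))) = eta *: tensR L psi (ket chi))).
Proof.
exists (Lfun (Fm R)); split; [split|split].
- exact: (@LL_inj n (n - k) U U_pauli U_hom NE E E_pauli E_id R R_adapted).
- exact: (@LL_onto n (n - k) U U_pauli U_hom U_one NE E E_pauli E_id R R_adapted).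
- exists (@UR (n - k)); split; [exact: UR_hom|split; [exact: UR_one|split; [exact: UR_unit|split]]].
    by move=> g psi w Hp; apply: intertw.
  exists (@Smx (n - k)); split; first exact: S_rank.
  by split; [rewrite S_rank card_grp | exact: S_inter].
exists (@ket (n - k)); split; first exact: ket_orth.
split; first exact: ket_span.
split; first by move=> chi Hc v; apply: prop2.
split; first by move=> chi psi Hc Hp; apply: prop3.
by move=> chi i Hc HC; apply: prop4.
Qed.
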